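(* Let $P,D$ be positive integers with $P\mid D$ and $\bm{W}\in\mathbb{R}^{P\times P\times P}$. For $\bm{h},\bm{r},\bm{t}\in\mathbb{R}^D$, viewed as matrices in $\mathbb{R}^{(D/P)\times P}$ with columns $\bm{h}_{:l},\bm{r}_{:m},\bm{t}_{:n}\in\mathbb{R}^{D/P}$, define $f(\bm{h},\bm{r},\bm{t})=\sum_{l,m,n=1}^{P}\bm{W}_{lmn}\langle\bm{h}_{:l},\bm{r}_{:m},\bm{t}_{:n}\rangle$, where $\langle\bm{a},\bm{b},\bm{c}\rangle=\sum_{d}\bm{a}_d\bm{b}_d\bm{c}_d$. Let $\bm{S}\in\mathbb{R}^{P^2\times P^2}$ be the permutation matrix with $\bm{S}_{(i-1)P+j,(j-1)P+i}=1$ for $i,j=1,\dots,P$ and all other entries $0$. Then: (a) the model learns symmetry rules, i.e. $\exists\bm{r}\in\mathbb{R}^D,\bm{r}\neq0$ such that $\forall\bm{h},\bm{t}\in\mathbb{R}^D$, $f(\bm{h},\bm{r},\bm{t})=f(\bm{t},\bm{r},\bm{h})$, if and only if $\operatorname{rank}(\bm{W}_{(2)}^T-\bm{S}\bm{W}_{(2)}^T)<P$; (b) the model learns antisymmetry rules, i.e. $\exists\bm{r}\in\mathbb{R}^D,\bm{r}\neq0$ such that $\forall\bm{h},\bm{t}$, $f(\bm{h},\bm{r},\bm{t})=-f(\bm{t},\bm{r},\bm{h})$, if and only if $\operatorname{rank}(\bm{W}_{(2)}^T+\bm{S}\bm{W}_{(2)}^T)<P$; (c) the model learns inverse rules, i.e.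 $\forall\bm{r}_1\in\mathbb{R}^D\ \exists\bm{r}_2\in\mathbb{R}^D\ \forall\bm{h},\bm{t}\in\mathbb{R}^D$, $f(\bm{h},\bm{r}_1,\bm{t})=f(\bm{t},\bm{r}_2,\bm{h})$, if and only if $\operatorname{rank}(\bm{W}_{(2)}^T)=\operatorname{rank}([\bm{W}_{(2)}^T,\bm{S}\bm{W}_{(2)}^T])$.
   Context: $\bm{W}_{(2)}\in\mathbb{R}^{P\times P^2}$ is the mode-2 unfolding of $\bm{W}$: its entry in row $m$ and column $l+(n-1)P$ is $\bm{W}_{lmn}$. $[\bm{A},\bm{B}]$ denotes horizontal concatenation of matrices. *)

(* Defs.v *)
From HB Require Import structures.
From mathcomp Require Import all_boot all_order all_algebra.
Set Implicit Arguments. Unset Strict Implicit. Unset Printing Implicit Defensive.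
Import Order.TTheory GRing.Theory Num.Theory.
Local Open Scope ring_scope.

Section Defs.
Variable R : realFieldType.

Definition ventry (D : nat) (h : 'cV[R]_D) (k : nat) : R :=
  if insub k is Some i then h i 0 else 0.

(* h viewed as a (D/P) x P matrix, column-major (vec convention):
   entry (d, l) (0-based) is h_{l*(D/P) + d}. *)
Definition resh (P D : nat) (h : 'cV[R]_D) (d l : nat) : R :=
  ventry h (l * (D %/ P) + d).

Definition trilin (P D : nat) (h r t : 'cV[R]_D) (l m n : nat) : R :=
  \sum_(d < D %/ P) resh P h d l * resh P r d m * resh P t d n.

Definition score (P D : nat) (W : 'I_P -> 'I_P -> 'I_P -> R)
  (h r t : 'cV[R]_D) : R :=
  \sum_(l < P) \sum_(m < P) \sum_(n < P) W l m n * trilin P h r t l m n.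

(* mode-2 unfolding W_(2) in R^{P x P^2}: entry (m, l + n*P) (0-based) is W l m n.
   mxvec_index n l has value n * P + l. *)
Definition unfold2 (P : nat) (W : 'I_P -> 'I_P -> 'I_P -> R) : 'M[R]_(P, P * P) :=
  \matrix_(m < P, c < P * P)
     (mxvec (\matrix_(n < P, l < P) W l m n) : 'rV[R]_(P * P)) 0 c.

Definition swapmx (P : nat) : 'M[R]_(P * P) :=
  \sum_(i < P) \sum_(j < P) delta_mx (mxvec_index i j) (mxvec_index j i).
End Defs.

(* Main.v *)
Require Import Defs.
From HB Require Import structures.
From mathcomp Require Import all_boot all_order all_algebra zify ring.
Import Order.TTheory GRing.Theory Num.Theory.
Set Implicit Arguments. Unset Strict Implicit. Unset Printing Implicit Defensive.
Local Open Scope ring_scope.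

Definition rowv (R : realFieldType) (P D : nat) (r : 'cV[R]_D) (d : nat) : 'cV[R]_P :=
  \col_(m < P) resh P r d m.
Definition Mx (R : realFieldType) (P : nat) (W : 'I_P -> 'I_P -> 'I_P -> R)
  (x : 'cV[R]_P) (l n : 'I_P) : R := \sum_(m < P) W l m n * x m 0.
Definition build (R : realFieldType) (P D : nat) (g : nat -> nat -> R) : 'cV[R]_D :=
  \col_(i < D) g (i %% (D %/ P))%N (i %/ (D %/ P))%N.

Lemma resh_build (R : realFieldType) (P D : nat) (hPD : (P %| D)%N) (g : nat -> nat -> R) d l :
  (d < D %/ P)%N -> (l < P)%N -> resh P (build P D g) d l = g d l.
Proof.
move=> hd hl; rewrite /resh /ventry; set K := (D %/ P)%N in hd *.
have K0 : (0 < K)%N by lia.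
case: insubP => [i _ /= Hi | Hn].
  rewrite mxE Hi.
  have -> : ((l * K + d) %% K = d)%N by rewrite modnMDl modn_small.
  by rewrite divnMDl // divn_small // addn0.
exfalso; move/negP: Hn; apply.
have: (l.+1 * K <= P * K)%N by rewrite leq_mul2r hl orbT.
rewrite [(P * _)%N]mulnC /K divnK //; rewrite mulSn; lia.
Qed.

Lemma score_E1 (R : realFieldType) (P D : nat) (W : 'I_P -> 'I_P -> 'I_P -> R) (h r t : 'cV[R]_D) :
  score W h r t = \sum_(d < D %/ P) \sum_(l < P) \sum_(n < P)
     resh P h d l * resh P t d n * Mx W (rowv P r d) l n.
Proof.
rewrite /score /trilin.
under eq_bigr => l _ do under eq_bigr => m _ do under eq_bigr => n _ do rewrite mulr_sumr.
under [RHS]eq_bigr => d _ do under eq_bigr => l _ do under eq_bigr => n _ do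
  rewrite /Mx mulr_sumr.
rewrite [RHS]exchange_big /=; apply: eq_bigr => l _.
under [RHS]eq_bigr => d _ do rewrite exchange_big /=.
rewrite [RHS]exchange_big /=; apply: eq_bigr => m _.
rewrite [RHS]exchange_big /=; apply: eq_bigr => n _.
apply: eq_bigr => d _; rewrite mxE; ring.
Qed.

Lemma ventry_ord (R : realFieldType) (D : nat) (h : 'cV[R]_D) (i : 'I_D) :
  ventry h i = h i 0.
Proof.
rewrite /ventry; case: insubP => [j _ /val_inj -> // | ].
by rewrite ltn_ord.
Qed.

Lemma rowv_build (R : realFieldType) (P D : nat) (hPD : (P %| D)%N)
  (g : nat -> nat -> R) (d : 'I_(D %/ P)) :
  rowv P (build P D g) d = \col_(m < P) g d m.
Proof. by apply/matrixP => m j; rewrite !mxE resh_build. Qed.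

Lemma rowv_buildv (R : realFieldType) (P D : nat) (hPD : (P %| D)%N)
  (F : nat -> 'cV[R]_P) (d : 'I_(D %/ P)) :
  rowv P (build P D (fun d m => ventry (F d) m)) d = F d.
Proof. by rewrite rowv_build //; apply/matrixP => m j; rewrite ord1 mxE ventry_ord. Qed.

Lemma rowv0 (R : realFieldType) (P D : nat) d : rowv P (0 : 'cV[R]_D) d = 0.
Proof.
apply/matrixP => m j; rewrite !mxE /resh /ventry.
by case: insubP => [i _ _|]; rewrite ?mxE.
Qed.

Definition unitv (R : realFieldType) (P D : nat) (d l : nat) : 'cV[R]_D :=
  build P D (fun d' l' => ((d' == d) && (l' == l))%:R).

Lemma score_unit (R : realFieldType) (P D : nat) (hPD : (P %| D)%N)
  (W : 'I_P -> 'I_P -> 'I_P -> R) (r : 'cV[R]_D) (d : 'I_(D %/ P)) (l n : 'I_P) :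
  score W (unitv R P D d l) r (unitv R P D d n) = Mx W (rowv P r d) l n.
Proof.
rewrite score_E1 (bigD1 d) //= [X in _ + X]big1 ?addr0 => [|d' nd]; last first.
  apply: big1 => l' _; apply: big1 => n' _; rewrite /unitv !resh_build //=.
  have nd' : (nat_of_ord d' == nat_of_ord d) = false := negbTE nd.
  by rewrite nd' /=; ring.
rewrite (bigD1 l) //= [X in _ + X]big1 ?addr0 => [|l' nl]; last first.
  rewrite /unitv; apply: big1 => n' _; rewrite !resh_build //= eqxx.
  have nl' : (nat_of_ord l' == nat_of_ord l) = false := negbTE nl.
  by rewrite nl' /=; ring.
rewrite (bigD1 n) //= [X in _ + X]big1 ?addr0 => [|n' nn]; last first.
  have nn' : (nat_of_ord n' == nat_of_ord n) = false := negbTE nn.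
  rewrite /unitv !resh_build //= eqxx nn' /=; ring.
by rewrite /unitv !resh_build // !eqxx mul1r mul1r.
Qed.

Lemma score_swap_iff (R : realFieldType) (P D : nat) (hPD : (P %| D)%N)
  (W : 'I_P -> 'I_P -> 'I_P -> R) (c : R) (r1 r2 : 'cV[R]_D) :
  (forall h t : 'cV[R]_D, score W h r1 t = c * score W t r2 h) <->
  (forall (d : 'I_(D %/ P)) (l n : 'I_P),
      Mx W (rowv P r1 d) l n = c * Mx W (rowv P r2 d) n l).
Proof.
split=> [H d l n | H h t].
  by rewrite -!score_unit // H.
rewrite !score_E1 mulr_sumr; apply: eq_bigr => d _.
rewrite [RHS]mulr_sumr.
under [RHS]eq_bigr => l _ do rewrite mulr_sumr.
rewrite [RHS]exchange_big /=; apply: eq_bigr => l _; apply: eq_bigr => n _.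
rewrite H; ring.
Qed.

Definition W2T (R : realFieldType) (P : nat) (W : 'I_P -> 'I_P -> 'I_P -> R) :=
  (unfold2 W)^T.

Lemma W2T_mul (R : realFieldType) (P : nat) (W : 'I_P -> 'I_P -> 'I_P -> R)
  (x : 'cV[R]_P) (n l : 'I_P) :
  (W2T W *m x) (mxvec_index n l) 0 = Mx W x l n.
Proof.
rewrite mxE /Mx; apply: eq_bigr => m _.
by rewrite /W2T !mxE mxvecE mxE.
Qed.

Lemma mxvec_index_inj (P : nat) (i j a b : 'I_P) :
  (mxvec_index i j == mxvec_index a b) = ((i == a) && (j == b)).
Proof.
apply/eqP/andP => [H | [/eqP -> /eqP ->] //].
move: H; rewrite /mxvec_index => /cast_ord_inj/enum_rank_inj.
by case=> -> ->.
Qed.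

Lemma swap_mul (R : realFieldType) (P : nat) (v : 'cV[R]_(P * P)) (i j : 'I_P) :
  (swapmx R P *m v) (mxvec_index i j) 0 = v (mxvec_index j i) 0.
Proof.
rewrite /swapmx mulmx_suml summxE (bigD1 i) //= [X in _ + X]big1 ?addr0.
  rewrite mulmx_suml summxE (bigD1 j) //= [X in _ + X]big1 ?addr0.
    rewrite mxE (bigD1 (mxvec_index j i)) //= [X in _ + X]big1 ?addr0.
      by rewrite mxE !eqxx mul1r.
    by move=> k nk; rewrite mxE eqxx (negbTE nk) mul0r.
  move=> b nb; rewrite mxE; apply: big1 => k _.
  by rewrite mxE mxvec_index_inj eqxx eq_sym (negbTE nb) mul0r.
move=> a na; rewrite mulmx_suml summxE; apply: big1 => b _.
rewrite mxE; apply: big1 => k _.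
by rewrite eq_sym in na; rewrite mxE mxvec_index_inj (negbTE na) mul0r.
Qed.

Lemma vec_iff (R : realFieldType) (P : nat) (W : 'I_P -> 'I_P -> 'I_P -> R)
  (c : R) (x y : 'cV[R]_P) :
  W2T W *m y = c *: (swapmx R P *m (W2T W *m x)) <->
  (forall l n : 'I_P, Mx W y l n = c * Mx W x n l).
Proof.
split=> [H l n | H].
  by rewrite -W2T_mul H mxE swap_mul W2T_mul.
apply/matrixP => k j; rewrite ord1; case/mxvec_indexP: k => n l.
by rewrite W2T_mul mxE swap_mul W2T_mul H.
Qed.

Lemma rank_lt_iff (R : realFieldType) (p P : nat) (A : 'M[R]_(p, P)) :
  (\rank A < P)%N <-> exists x : 'cV[R]_P, x != 0 /\ A *m x = 0.
Proof.
split=> [H | [x [nx Ax]]].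
  have hk : (0 < \rank (kermx A^T))%N by rewrite mxrank_ker mxrank_tr subn_gt0.
  have : kermx A^T != 0 by rewrite -mxrank_eq0 -lt0n.
  have [k nk | all0] := pickP (fun k => row k (kermx A^T) != 0).
    move=> _; exists (row k (kermx A^T))^T; split.
      by apply: contra nk => /eqP; rewrite -trmx0 => /trmx_inj ->.
    by rewrite -[A]trmxK -trmx_mul trmxK -row_mul mulmx_ker row0 trmx0.
  move/negP; case; apply/eqP/row_matrixP => k; rewrite row0.
  by have := all0 k; move/negbFE/eqP.
rewrite ltn_neqAle rank_leq_col andbT; apply/negP => /eqP Hr.
have rf : row_free A^T by rewrite /row_free mxrank_tr Hr.
move/negP: nx; apply; apply/eqP; apply: trmx_inj; rewrite trmx0.
apply: (row_free_inj rf); rewrite mul0mx -trmx_mul Ax trmx0 //.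
Qed.

Lemma rank_rowmx_iff (R : realFieldType) (p q q' : nat) (A : 'M[R]_(p, q))
  (B : 'M[R]_(p, q')) :
  \rank A = \rank (row_mx A B) <-> exists Z, B = A *m Z.
Proof.
rewrite -mxrank_tr -[\rank (row_mx A B)]mxrank_tr tr_row_mx -addsmxE.
have := mxrank_leqif_sup (addsmxSl A^T B^T).
rewrite addsmx_sub submx_refl /= => [[_ Heq]].
split=> [/eqP | [Z HZ]].
  rewrite Heq => /submxP [Z HZ]; exists Z^T.
  by apply: trmx_inj; rewrite trmx_mul trmxK.
apply/eqP; rewrite Heq HZ; apply/submxP; exists Z^T.
by rewrite trmx_mul.
Qed.

Lemma rowv_buildc (R : realFieldType) (P D : nat) (hPD : (P %| D)%N)
  (x : 'cV[R]_P) (d : 'I_(D %/ P)) :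
  rowv P (build P D (fun _ m => ventry x m)) d = x.
Proof. exact: (rowv_buildv hPD (fun _ => x)). Qed.

Lemma Kpos (P D : nat) : (0 < P)%N -> (0 < D)%N -> (P %| D)%N -> (0 < D %/ P)%N.
Proof. by move=> hP hD hPD; rewrite divn_gt0 // dvdn_leq. Qed.

Lemma part_ab (R : realFieldType) (P D : nat) (hP : (0 < P)%N) (hD : (0 < D)%N)
  (hPD : (P %| D)%N) (W : 'I_P -> 'I_P -> 'I_P -> R) (c : R) :
  (exists r : 'cV[R]_D, r != 0 /\ forall h t : 'cV[R]_D, score W h r t = c * score W t r h)
  <-> (\rank (W2T W - c *: (swapmx R P *m W2T W))%R < P)%N.
Proof.
have K0 := Kpos hP hD hPD; pose d0 : 'I_(D %/ P) := Ordinal K0.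
rewrite rank_lt_iff; split.
  move=> [r [nr /(score_swap_iff hPD) H]].
  have [d nd] : exists d : 'I_(D %/ P), rowv P r d != 0.
    case: (pickP (fun d : 'I_(D %/ P) => rowv P r d != 0)) => [d nd | all0]; first by exists d.
    exfalso; move/negP: nr; apply; apply/eqP/matrixP => i j; rewrite ord1 mxE.
    clear d0; set K := (D %/ P)%N in K0 all0 *.
    have Hd : (i %% K < K)%N by rewrite ltn_pmod.
    have Hl : (i %/ K < P)%N.
      rewrite ltn_divLR // /K mulnC divnK //.
    have := all0 (Ordinal Hd); move/negbFE/eqP/matrixP/(_ (Ordinal Hl) 0).
    by rewrite !mxE /resh /= -divn_eq ventry_ord.
  exists (rowv P r d); split => //.
  rewrite mulmxBl -scalemxAl -mulmxA; apply/eqP; rewrite subr_eq0; apply/eqP.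
  by apply/vec_iff => l n; exact: H.
move=> [x [nx Ax]].
have Hx : forall l n, Mx W x l n = c * Mx W x n l.
  apply/vec_iff; move: Ax; rewrite mulmxBl -scalemxAl -mulmxA => /eqP.
  by rewrite subr_eq0 => /eqP.
exists (build P D (fun _ m => ventry x m)); split.
  apply: contra nx => /eqP H0.
  by rewrite -(rowv_buildc hPD x d0) H0 rowv0.
by apply/(score_swap_iff hPD) => d l n; rewrite !rowv_buildc.
Qed.

Lemma part_c (R : realFieldType) (P D : nat) (hP : (0 < P)%N) (hD : (0 < D)%N)
  (hPD : (P %| D)%N) (W : 'I_P -> 'I_P -> 'I_P -> R) :
  (forall r1 : 'cV[R]_D, exists r2 : 'cV[R]_D,
       forall h t : 'cV[R]_D, score W h r1 t = score W t r2 h)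
  <-> exists Z, swapmx R P *m W2T W = W2T W *m Z.
Proof.
have K0 := Kpos hP hD hPD; pose d0 : 'I_(D %/ P) := Ordinal K0.
split=> [H | [Z HZ] r1].
  have Hj : forall j : 'I_P, exists y : 'cV[R]_P,
      W2T W *m y = 1 *: (swapmx R P *m (W2T W *m delta_mx j 0)).
    move=> j; pose ej : 'cV[R]_P := delta_mx j 0.
    have [r2 Hr2] := H (build P D (fun _ m => ventry ej m)).
    exists (rowv P r2 d0); apply/vec_iff => l n.
    have Hs : forall h t : 'cV[R]_D,
        score W h (build P D (fun _ m => ventry ej m)) t = 1 * score W t r2 h.
      by move=> h t; rewrite mul1r.
    have := proj1 (score_swap_iff hPD W 1 _ _) Hs d0 n l.
    by rewrite rowv_buildc // !mul1r => E; rewrite -E.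
  have [f Hf] := fin_all_exists Hj.
  exists (\matrix_(i, j) f j i 0); apply/matrixP => k j.
  have E1 : (swapmx R P *m W2T W) k j = col j (swapmx R P *m W2T W) k 0 by rewrite [RHS]mxE.
  have E2 : (W2T W *m \matrix_(i, j) f j i 0) k j = (W2T W *m f j) k 0.
    rewrite [LHS]mxE [RHS]mxE; apply: eq_bigr => m _; by rewrite [X in _ * X]mxE.
  by rewrite E1 E2 Hf scale1r mulmxA -colE.
exists (build P D (fun d m => ventry (Z *m rowv P r1 d) m)).
move=> h t; rewrite -[score W t _ h]mul1r; move: h t.
apply/(score_swap_iff hPD) => d l n.
have := rowv_buildv hPD (fun d => Z *m rowv P r1 d) d; rewrite /= => ->.
have Hv : W2T W *m (Z *m rowv P r1 d) = 1 *: (swapmx R P *m (W2T W *m rowv P r1 d)).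
  by rewrite scale1r mulmxA -HZ mulmxA.
by move/vec_iff: Hv => /(_ n l) ->; rewrite !mul1r.
Qed.

Unset Implicit Arguments.

Theorem theorem1 (R : realFieldType) (P D : nat) (hP : (0 < P)%N) (hD : (0 < D)%N)
  (hPD : (P %| D)%N) (W : 'I_P -> 'I_P -> 'I_P -> R) :
  let f := @score R P D W in
  let W2T := (unfold2 W)^T in
  let S := swapmx R P in
  ((exists r : 'cV[R]_D, r != 0 /\ forall h t : 'cV[R]_D, f h r t = f t r h)
     <-> (\rank (W2T - S *m W2T)%R < P)%N)
  /\
  ((exists r : 'cV[R]_D, r != 0 /\ forall h t : 'cV[R]_D, f h r t = - f t r h)
     <-> (\rank (W2T + S *m W2T)%R < P)%N)
  /\
  ((forall r1 : 'cV[R]_D, exists r2 : 'cV[R]_D,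
       forall h t : 'cV[R]_D, f h r1 t = f t r2 h)
     <-> \rank W2T = \rank (row_mx W2T (S *m W2T))).
Proof.
move=> f W2' S; rewrite /f /W2' /S; clear f W2' S.
split; [|split].
- have L := part_ab hP hD hPD W 1; rewrite scale1r in L.
  split=> [[r [nr H]] | Hr].
    by apply/L; exists r; split => // h t; rewrite mul1r.
  by have [r [nr H]] := proj2 L Hr; exists r; split => // h t; rewrite H mul1r.
- have L := part_ab hP hD hPD W (-1); rewrite scaleN1r opprK in L.
  split=> [[r [nr H]] | Hr].
    by apply/L; exists r; split => // h t; rewrite mulN1r.
  by have [r [nr H]] := proj2 L Hr; exists r; split => // h t; rewrite H mulN1r.
- rewrite (part_c hP hD hPD W); exact: iff_sym (rank_rowmx_iff _ _).
Qed.
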